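(* Let $(X,G)$ be a minimal continuous action and $m\in\mathbb{N}$, $m\geq 2$. Then $(X,G)$ is $m$-equicontinuous if and only if $Q_m(X,G)\setminus\Delta^{(m)}(X)=\emptyset$.
   Context: $G$ is a locally compact topological group acting continuously on a compact metric space $(X,d)$; minimal means every orbit is dense. $(X,G)$ is $m$-equicontinuous if for every $x\in X$ and $\varepsilon>0$ there is $\delta>0$ such that for any $x_1,\dots,x_m$ in the open ball $B_\delta(x)$ and every $g\in G$ there exist $i\neq j$ with $d(gx_i,gx_j)<\varepsilon$. A tuple $(x_1,\dots,x_m)\in X^m$ is $m$-regionally proximal if for each $\varepsilon>0$ there exist $x_1',\dots,x_m'\in X$ with $d(x_i,x_i')<\varepsilon$ for all $i$, and $g\in G$ with $d(gx_i',gx_j')<\varepsilon$ for all $i,j$; $Q_m(X,G)$ is the set of such tuples. $\Delta^{(m)}(X)=\{(x_1,\dots,x_m)\in X^m: x_i=x_j$ for some $i\neq j\}$. *)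

(* Defs.v *)
From HB Require Import structures.
From mathcomp Require Import all_boot all_order all_algebra.
From mathcomp Require Import all_classical all_reals all_analysis.
Set Implicit Arguments. Unset Strict Implicit. Unset Printing Implicit Defensive.
Import Order.TTheory GRing.Theory Num.Theory.
Local Open Scope classical_set_scope.
Local Open Scope ring_scope.

Definition is_topological_group (G : topologicalType)
    (mul : G -> G -> G) (inv : G -> G) (e : G) : Prop :=
  [/\ (forall a b c, mul a (mul b c) = mul (mul a b) c),
      (forall a, mul e a = a),
      (forall a, mul (inv a) a = e),
      continuous (fun p : G * G => mul p.1 p.2)
    & continuous inv].

Definition is_locally_compact_group (G : topologicalType)
    (mul : G -> G -> G) (inv : G -> G) (e : G) : Prop :=
  is_topological_group mul inv e /\ locally_compact [set: G].

Definition is_continuous_action (G X : topologicalType)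
    (mul : G -> G -> G) (e : G) (act : G -> X -> X) : Prop :=
  [/\ (forall x, act e x = x),
      (forall g h x, act (mul g h) x = act g (act h x))
    & continuous (fun p : G * X => act p.1 p.2)].

Definition minimal_action (G X : topologicalType) (act : G -> X -> X) : Prop :=
  forall x : X, closure [set act g x | g in [set: G]] = [set: X].

Definition m_equicontinuous {R : realType} (G : Type) (X : metricType R)
    (act : G -> X -> X) (m : nat) : Prop :=
  forall (x : X) (eps : R), 0 < eps ->
  exists2 delta : R, 0 < delta &
    forall xs : 'I_m -> X, (forall i, mdist x (xs i) < delta) ->
    forall g : G, exists i j : 'I_m, i != j /\ mdist (act g (xs i)) (act g (xs j)) < eps.

Definition Q_m {R : realType} (G : Type) (X : metricType R)
    (act : G -> X -> X) (m : nat) : set ('I_m -> X) :=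
  [set xs | forall eps : R, 0 < eps ->
     exists xs' : 'I_m -> X,
       (forall i, mdist (xs i) (xs' i) < eps) /\
       exists g : G, forall i j, mdist (act g (xs' i)) (act g (xs' j)) < eps].

Definition Delta_m (X : Type) (m : nat) : set ('I_m -> X) :=
  [set xs | exists i j : 'I_m, i != j /\ xs i = xs j].
Arguments Delta_m : clear implicits.
Arguments Q_m {R G X} act m _.
Arguments m_equicontinuous {R G X} act m.
Arguments minimal_action {G X} act.
Arguments is_continuous_action {G X} mul e act.
Arguments is_locally_compact_group {G} mul inv e.

(* Main.v *)
Require Import Defs.
From HB Require Import structures.
From mathcomp Require Import all_boot all_order all_algebra.
From mathcomp Require Import all_classical all_reals all_analysis.
From mathcomp Require Import lra.
Import Order.TTheory GRing.Theory Num.Theory.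
Local Open Scope classical_set_scope.
Local Open Scope ring_scope.
Lemma clusterA (R : realType) (X : metricType R) (P : R -> set X) :
  compact [set: X] -> (forall e, 0 < e -> P e !=set0) ->
  (forall e1 e2, 0 < e1 -> e1 <= e2 -> P e1 `<=` P e2) ->
  exists z, forall e, 0 < e -> exists2 y, P e y & mdist z y < e.
Proof.
move=> cX ne mono.
pose F := filter_from [set e : R | 0 < e] P.
have FF : Filter F.
  apply: filter_from_filter; first by exists 1; rewrite /= ltr01.
  move=> i j; rewrite /= => i0 j0; exists (Order.min i j); first by rewrite lt_min i0 j0.
  move=> y Py; split; apply: (mono (Order.min i j)) => //;
    by rewrite ?lt_min ?i0 ?j0 ?ge_min ?lexx ?orbT.
have PF : ProperFilter F by apply: filter_from_proper.
have [z [_ cz]] := cX F PF (ex_intro2 _ _ 1 ltr01 (fun _ _ => I)).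
exists z => e e0.
have FPe : F (P e) by exists e.
have [y [Py bz]] := cz (P e) (ball z e) FPe (nbhsx_ballx z _ e0).
by exists y => //; move: bz; rewrite ballEmdist.
Qed.

Lemma clusterB (R : realType) (X : metricType R) (m : nat) (P : R -> set ('I_m -> X)) :
  compact [set: X] -> (forall e, 0 < e -> P e !=set0) ->
  (forall e1 e2, 0 < e1 -> e1 <= e2 -> P e1 `<=` P e2) ->
  exists z : 'I_m -> X, forall e, 0 < e -> exists2 t, P e t & forall i, mdist (z i) (t i) < e.
Proof.
move=> cX ne mono.
suff H : forall k, exists z : 'I_m -> X, forall e, 0 < e ->
    exists2 t, P e t & forall i : 'I_m, (i < k)%N -> mdist (z i) (t i) < e.
  have [z Hz] := H m; exists z => e e0; have [t Pt Ht] := Hz e e0.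
  by exists t => // i; apply: Ht.
elim=> [|k [z IH]].
  have [t0 _] := ne 1 ltr01; exists t0 => e e0; have [t Pt] := ne e e0.
  by exists t.
case: (ltnP k m) => km; last first.
  exists z => e e0; have [t Pt Ht] := IH e e0; exists t => // i ik.
  by apply: Ht; apply: leq_trans (ltn_ord i) km.
pose k' := Ordinal km.
pose Q e := [set t k' | t in [set t | P e t /\ forall i : 'I_m, (i < k)%N -> mdist (z i) (t i) < e]].
have neQ : forall e, 0 < e -> Q e !=set0.
  move=> e e0; have [t Pt Ht] := IH e e0; exists (t k'); exists t => //.
have monoQ : forall e1 e2, 0 < e1 -> e1 <= e2 -> Q e1 `<=` Q e2.
  move=> e1 e2 e10 e12 y [t [Pt Ht] <-]; exists t => //; split.
    by apply: (mono e1).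
  by move=> i ik; apply: lt_le_trans (Ht i ik) e12.
have [w Hw] := @clusterA R X Q cX neQ monoQ.
exists (fun i => if i == k' then w else z i) => e e0.
have [y [t [Pt Ht] <-] wy] := Hw e e0.
exists t => // i; rewrite ltnS leq_eqVlt => /orP[ik|ik].
  have -> : i = k' by apply: val_inj; apply/eqP.
  by rewrite eqxx.
have -> : (i == k') = false by apply/negbTE; rewrite -val_eqE /= neq_ltn ik.
exact: Ht.
Qed.
Lemma sepmin (R : realType) (X : metricType R) (m : nat) (xs : 'I_m -> X) :
  ~ Delta_m X m xs -> exists2 s : R, 0 < s & forall i j, i != j -> s <= mdist (xs i) (xs j).
Proof.
move=> xD.
exists (\big[Order.min/1]_(p : 'I_m * 'I_m | p.1 != p.2) mdist (xs p.1) (xs p.2)).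
  apply: (big_ind (fun v : R => 0 < v)) => //.
    by move=> a b a0 b0; rewrite lt_min a0 b0.
  move=> [i j] /= ij; rewrite mdist_gt0; apply/eqP => E; apply: xD.
  by exists i, j.
move=> i j ij; rewrite (bigD1 (i, j)) //=.
by rewrite ge_min lexx.
Qed.

Theorem theorem4p6 (R : realType) (G : topologicalType)
    (mul : G -> G -> G) (inv : G -> G) (e : G)
    (X : metricType R) (act : G -> X -> X) (m : nat) :
  is_locally_compact_group mul inv e ->
  compact [set: X] ->
  is_continuous_action mul e act ->
  minimal_action act ->
  (2 <= m)%N ->
  (m_equicontinuous act m <-> Q_m act m `\` Delta_m X m = set0).
Proof.
move=> [[_ _ invl _ _] _] cX [acte actM _] _ m2.
have actinv : forall g x, act (inv g) (act g x) = x.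
  by move=> g x; rewrite -actM invl acte.
split.
- move=> Heq; apply/seteqP; split => [xs [xQ xD]|//].
  have [s s0 Hs] := @sepmin _ _ _ xs xD.
  have m0 : (0 < m)%N by apply: leq_trans m2.
  pose i0 := Ordinal m0.
  pose P (eta : R) := [set y | exists xs' : 'I_m -> X, exists g,
    [/\ (forall i, mdist (xs i) (xs' i) < eta),
        (forall i j, mdist (act g (xs' i)) (act g (xs' j)) < eta) &
        y = act g (xs' i0)]].
  have neP : forall eta, 0 < eta -> P eta !=set0.
    move=> eta eta0; have [xs' [H1 [g H2]]] := xQ eta eta0.
    by exists (act g (xs' i0)); exists xs', g.
  have monoP : forall e1 e2, 0 < e1 -> e1 <= e2 -> P e1 `<=` P e2.
    move=> e1 e2 _ e12 y [xs' [g [H1 H2 ->]]]; exists xs', g; split => //.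
      by move=> i; apply: lt_le_trans (H1 i) e12.
    by move=> i j; apply: lt_le_trans (H2 i j) e12.
  have [z Hz] := @clusterA _ _ _ cX neP monoP.
  have s20 : 0 < s / 2 by rewrite divr_gt0.
  have [delta delta0 Hd] := Heq z (s / 2) s20.
  pose eta := Order.min (delta / 2) (s / 4).
  have eta0 : 0 < eta by rewrite lt_min !divr_gt0.
  have etad : eta <= delta / 2 by rewrite ge_min lexx.
  have etas : eta <= s / 4 by rewrite ge_min lexx orbT.
  have [y [xs' [g [H1 H2 ->]]] zy] := Hz eta eta0.
  have Hball : forall i, mdist z (act g (xs' i)) < delta.
    move=> i; have t := metric_triangle z (act g (xs' i0)) (act g (xs' i)).
    have a := H2 i0 i; lra.
  have [i [j [ij Hij]]] := Hd (fun i => act g (xs' i)) Hball (inv g).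
  rewrite !actinv in Hij.
  have := Hs i j ij.
  have t1 := metric_triangle (xs i) (xs' i) (xs j).
  have t2 := metric_triangle (xs' i) (xs' j) (xs j).
  have a1 := H1 i; have a2 := H1 j.
  rewrite (metric_sym (xs' j) (xs j)) in t2.
  move=> hs; lra.
- move=> HQ x eps eps0; apply: contrapT => Hno.
  have Hbad : forall d, 0 < d -> exists xs : 'I_m -> X,
      (forall i, mdist x (xs i) < d) /\ exists g, forall i j, i != j ->
        ~ (mdist (act g (xs i)) (act g (xs j)) < eps).
    move=> d d0; apply: contrapT => H; apply: Hno; exists d => // xs Hxs g.
    apply: contrapT => H2; apply: H; exists xs; split => //; exists g.
    by move=> i j ij Hd; apply: H2; exists i, j.
  pose P (d : R) := [set t : 'I_m -> X | exists xs : 'I_m -> X, exists g,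
     [/\ (forall i, mdist x (xs i) < d),
         t = (fun i => act g (xs i)) &
         forall i j, i != j -> ~ (mdist (act g (xs i)) (act g (xs j)) < eps)]].
  have neP : forall d, 0 < d -> P d !=set0.
    move=> d d0; have [xs [H1 [g H2]]] := Hbad d d0.
    by exists (fun i => act g (xs i)); exists xs, g.
  have monoP : forall e1 e2, 0 < e1 -> e1 <= e2 -> P e1 `<=` P e2.
    move=> e1 e2 _ e12 y [xs [g [H1 -> H2]]]; exists xs, g; split => //.
    by move=> i; apply: lt_le_trans (H1 i) e12.
  have [z Hz] := @clusterB _ _ _ _ cX neP monoP.
  have zQ : Q_m act m z.
    move=> eta eta0.
    have eta20 : 0 < eta / 2 by rewrite divr_gt0.
    have [t [xs [g [Hxs -> Hg]]] Ht] := Hz (eta / 2) eta20.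
    exists (fun i => act g (xs i)); split.
      move=> i; have := Ht i; move=> h; lra.
    exists (inv g) => i j; rewrite !actinv.
    have t1 := metric_triangle (xs i) x (xs j).
    rewrite (metric_sym (xs i) x) in t1.
    have a1 := Hxs i; have a2 := Hxs j; lra.
  have zD : ~ Delta_m X m z.
    move=> [i [j [ij zij]]].
    have eps20 : 0 < eps / 2 by rewrite divr_gt0.
    have [t [xs [g [Hxs -> Hg]]] Ht] := Hz (eps / 2) eps20.
    apply: (Hg i j ij).
    have t1 := metric_triangle (act g (xs i)) (z i) (act g (xs j)).
    have a1 := Ht i; have a2 := Ht j; rewrite /= in a1 a2.
    rewrite (metric_sym (act g (xs i)) (z i)) zij in t1.
    rewrite zij in a1; lra.
  have : (Q_m act m `\` Delta_m X m) z by split.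
  by rewrite HQ.
Qed.
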